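(* Let $p$ be a prime, let $A$ be a commutative ring with $\mathbb{Q}\subseteq A$, and let $|_0$ be a $p$-archimedean $p$-divisibility on $A$. Then an element $|$ of $\mathrm{Spec}\,D_p(A,|_0)$ is maximal (under inclusion) if and only if $I(|)$ is prime and the corresponding $p$-valuation $\bar v$ on $F=\mathrm{Quot}(A/I(|))$ has value group $\mathbb{Z}$.
   Context: A divisibility on $A$ is a binary relation $|\subseteq A\times A$ such that for all $a,b,c$: (1) $a|a$; (2) $a|b,\ b|c\Rightarrow a|c$; (3) $a|b,\ a|c\Rightarrow a|b-c$; (4) $a|b\Rightarrow ac|bc$; (5) $0\nmid1$. A $p$-divisibility additionally satisfies for all $a,b$: (6) $0\nmid a\Rightarrow pa\nmid a$; (7) $p[(a^pb-b^pa)^2-(b^{p+1})^2]\ \big|\ (a^pb-b^pa)b^{p+1}$. It is $p$-archimedean if for all $a$ there is $m\in\mathbb{Z}$ with $p^m|a$. Support $I(|)=\{a;\ 0|a\}$; total: $a|b$ or $b|a$; cancellation: $0\nmid c,\ ac|bc\Rightarrow a|b$. $\mathrm{Spec}\,D_p(A,|_0)$ is the set of total $p$-divisibilities with cancellation containing $|_0$. A $p$-valuation on a field of characteristic $0$ is a valuation whose value group is discretely ordered with $v(p)$ minimal positive and whose residue field is $\mathbb{F}_p$. For $|\in\mathrm{Spec}\,D_p(A,|_0)$, the corresponding $p$-valuation $\bar v$ on $\mathrm{Quot}(A/I(|))$ is the unique (up to equivalence) $p$-valuation with $a|b\Leftrightarrow\bar v(a+I(|))\le\bar v(b+I(|))$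 for all $a,b\in A$. *)

(* Defs.v *)
From HB Require Import structures.
From mathcomp Require Import all_boot all_order all_algebra.
Set Implicit Arguments. Unset Strict Implicit. Unset Printing Implicit Defensive.
Import Order.TTheory GRing.Theory Num.Theory.
Local Open Scope ring_scope.

Section Divisibility.
Variable A : comUnitRingType.
Variable p : nat.

(* A binary relation on A, thought of as "a | b". *)
Definition divisibility (dv : A -> A -> Prop) : Prop :=
  [/\ (forall a, dv a a),
      (forall a b c, dv a b -> dv b c -> dv a c),
      (forall a b c, dv a b -> dv a c -> dv a (b - c)),
      (forall a b c, dv a b -> dv (a * c) (b * c))
    & ~ dv 0 1].

Definition p_divisibility (dv : A -> A -> Prop) : Prop :=
  [/\ divisibility dv,
      (forall a, ~ dv 0 a -> ~ dv (p%:R * a) a)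
    & (forall a b,
        dv (p%:R * ((a ^+ p * b - b ^+ p * a) ^+ 2 - (b ^+ p.+1) ^+ 2))
           ((a ^+ p * b - b ^+ p * a) * b ^+ p.+1))].

(* p-archimedean: every a is divisible by some integral power of p
   (negative powers make sense since Q is contained in A). *)
Definition p_archimedean (dv : A -> A -> Prop) : Prop :=
  forall a, exists m : int, dv ((p%:R : A) ^ m) a.

Definition div_support (dv : A -> A -> Prop) : A -> Prop := fun a => dv 0 a.

Definition total_rel (dv : A -> A -> Prop) : Prop :=
  forall a b, dv a b \/ dv b a.

Definition cancellation (dv : A -> A -> Prop) : Prop :=
  forall a b c, ~ dv 0 c -> dv (a * c) (b * c) -> dv a b.

Definition rel_sub (dv dv' : A -> A -> Prop) : Prop :=
  forall a b, dv a b -> dv' a b.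

Definition in_SpecDp (dv0 dv : A -> A -> Prop) : Prop :=
  [/\ p_divisibility dv, total_rel dv, cancellation dv & rel_sub dv0 dv].

Definition maximal_in_SpecDp (dv0 dv : A -> A -> Prop) : Prop :=
  in_SpecDp dv0 dv /\
  forall dv', in_SpecDp dv0 dv' -> rel_sub dv dv' -> rel_sub dv' dv.

Definition prime_ideal (I : A -> Prop) : Prop :=
  [/\ (I 0), (forall a b, I a -> I b -> I (a - b)),
      (forall a b, I a -> I (a * b)), ~ I 1
    & (forall a b, I (a * b) -> I a \/ I b)].

Definition is_quot_field_of_quotient (I : A -> Prop) (F : fieldType)
  (phi : {rmorphism A -> F}) : Prop :=
  (forall a, phi a = 0 <-> I a) /\
  (forall x : F, exists a b, phi b != 0 /\ x = phi a / phi b).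

End Divisibility.

Definition ordered_abelian_group (G : zmodType) (le : G -> G -> Prop) : Prop :=
  [/\ (forall x, le x x),
      (forall x y, le x y -> le y x -> x = y),
      (forall x y z, le x y -> le y z -> le x z),
      (forall x y, le x y \/ le y x)
    & (forall x y z, le x y -> le (x + z) (y + z))].

Definition gt_rel (G : zmodType) (le : G -> G -> Prop) (x y : G) : Prop :=
  le y x /\ x <> y.

(* A (Krull) valuation v : F^x -> G (values of v at 0 are irrelevant;
   v(0) = infinity by convention). *)
Definition valuation (F : fieldType) (G : zmodType) (le : G -> G -> Prop)
  (v : F -> G) : Prop :=
  (forall x y, x != 0 -> y != 0 -> v (x * y) = v x + v y) /\
  (forall x y, x != 0 -> y != 0 -> x + y != 0 ->
     le (v x) (v (x + y)) \/ le (v y) (v (x + y))).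

(* A p-valuation on a field of characteristic 0: value group
   v(F^x) discretely ordered with v(p) minimal positive, residue field F_p
   (i.e. every element of the valuation ring is congruent to an integer
   modulo the maximal ideal; since v(p) > 0 the residue field is then F_p). *)
Definition p_valuation (p : nat) (F : fieldType) (G : zmodType)
  (le : G -> G -> Prop) (v : F -> G) : Prop :=
  [/\ [pchar F] =i pred0,
      valuation le v,
      gt_rel le (v p%:R) 0,
      (forall x : F, x != 0 -> ~ (gt_rel le (v x) 0 /\ gt_rel le (v p%:R) (v x)))
    & (forall x : F, x != 0 -> le 0 (v x) ->
         exists n : nat, x - n%:R = 0 \/
                         (x - n%:R != 0 /\ gt_rel le (v (x - n%:R)) 0))].

(* extended order with v(0) = infinity:  v(x) <= v(y) *)
Definition vle (F : fieldType) (G : zmodType) (le : G -> G -> Prop)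
  (v : F -> G) (x y : F) : Prop :=
  y = 0 \/ (x != 0 /\ le (v x) (v y)).

Definition corresponds (A : comUnitRingType) (dv : A -> A -> Prop)
  (F : fieldType) (phi : {rmorphism A -> F}) (G : zmodType)
  (le : G -> G -> Prop) (v : F -> G) : Prop :=
  forall a b, dv a b <-> vle le v (phi a) (phi b).

Definition value_group_is_Z (F : fieldType) (G : zmodType)
  (le : G -> G -> Prop) (v : F -> G) : Prop :=
  exists f : int -> G,
    [/\ (forall m n, f (m + n) = f m + f n),
        (forall m n, le (f m) (f n) <-> (m <= n)%R),
        (forall x : F, x != 0 -> exists n, v x = f n)
      & (forall n, exists x : F, x != 0 /\ v x = f n)].

(* Main.v *)
Require Import Defs.
From HB Require Import structures.
From mathcomp Require Import all_boot all_order all_algebra all_field.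
From mathcomp Require Import ring zify.
From Stdlib Require Import Classical ClassicalEpsilon FunctionalExtensionality PropExtensionality.
Import Order.TTheory GRing.Theory Num.Theory.
Local Open Scope ring_scope.
Unset Printing Implicit Defensive.

Module T1.
Set Implicit Arguments. Unset Strict Implicit.
Definition fermatQ (p : nat) : {poly int} :=
  'X^p - 'X - \prod_(i < p) ('X - (i%:Z)%:P).

Lemma fermatQ_map (R : comNzRingType) p :
  map_poly (intr : int -> R) (fermatQ p) = 'X^p - 'X - \prod_(i < p) ('X - (i%:R)%:P).
Proof.
rewrite /fermatQ !rmorphB /= map_polyXn map_polyX rmorph_prod /=; congr (_ - _).
apply: eq_bigr => i _; by rewrite rmorphB /= map_polyX map_polyC /= pmulrn.
Qed.

Lemma fermatQ_eval (R : comNzRingType) p (y : R) :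
  (map_poly intr (fermatQ p)).[y] = y ^+ p - y - \prod_(i < p) (y - i%:R).
Proof.
rewrite fermatQ_map !hornerE horner_prod; congr (_ - _).
by apply: eq_bigr => i _; rewrite !hornerE.
Qed.

Lemma fermatQ_Fp p : prime p -> map_poly (intr : int -> 'F_p) (fermatQ p) = 0.
Proof.
move=> pp; rewrite fermatQ_map.
have := @finField_genPoly ('F_p : finFieldType).
rewrite card_Fp // => ->; apply/eqP; rewrite subr_eq0; apply/eqP.
set G := fun i : nat => 'X - ((i%:R : 'F_p))%:P.
have -> : \prod_(i < p) ('X - (i%:R)%:P) = \prod_(0 <= i < p) G i by rewrite big_mkord.
have gen : forall n, n = p -> \prod_(0 <= i < n) G i = \prod_(0 <= i < p) G i by move=> n ->.
rewrite -(gen _ (Fp_cast pp)) big_mkord; apply: eq_bigr => i _.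
by rewrite /G natr_Zp.
Qed.

Lemma Fp_nat0 p n : prime p -> (n%:R : 'F_p) = 0 -> exists k : nat, n = (p * k)%N.
Proof.
move=> pp h; have := val_Fp_nat pp n; rewrite h /= => h0.
exists (n %/ p)%N; by rewrite mulnC {1}(div.divn_eq n p) -h0 addn0.
Qed.

Lemma fermatQ_coef p : prime p -> forall i, exists k : int, (fermatQ p)`_i = p%:Z * k.
Proof.
move=> pp i; have := congr1 (fun q : {poly 'F_p} => q`_i) (fermatQ_Fp pp).
rewrite coef_map /= coef0; case: ((fermatQ p)`_i) => n.
- rewrite -pmulrn => /(Fp_nat0 pp) [k ->]; exists k; by rewrite PoszM.
- rewrite NegzE mulrNz -pmulrn => /eqP; rewrite oppr_eq0 => /eqP /(Fp_nat0 pp) [k hk].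
  exists (- k%:Z); by rewrite hk PoszM mulrN.
Qed.

Section Gen.
Variable R : comUnitRingType.
Variable d : R -> R -> Prop.
Hypothesis hd : divisibility d.
Hypothesis htot : total_rel d.
Hypothesis hcan : cancellation d.

Lemma grefl a : d a a. Proof. by case: hd. Qed.
Lemma gtrans a b c : d a b -> d b c -> d a c. Proof. by case: hd => _ h _ _ _; apply: h. Qed.
Lemma gsub a b c : d a b -> d a c -> d a (b - c). Proof. by case: hd => _ _ h _ _; apply: h. Qed.
Lemma gmulr a b c : d a b -> d (a * c) (b * c). Proof. by case: hd => _ _ _ h _; apply: h. Qed.
Lemma g01 : ~ d 0 1. Proof. by case: hd. Qed.
Lemma g0 a : d a 0. Proof. by rewrite -(subrr a); apply: gsub; apply: grefl. Qed.
Lemma gopp a b : d a b -> d a (- b). Proof. by move=> h; rewrite -sub0r; apply: gsub => //; apply: g0. Qed.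
Lemma gadd a b c : d a b -> d a c -> d a (b + c).
Proof. by move=> h1 h2; rewrite -(opprK c); apply: gsub => //; apply: gopp. Qed.
Lemma gmull a b c : d a b -> d (c * a) (c * b).
Proof. by move=> h; rewrite ![c * _]mulrC; apply: gmulr. Qed.
Lemma gnegl a b : d a b -> d (- a) b.
Proof. move=> h; have := gmulr (-1) h; rewrite !mulrN1 => h2; by rewrite -(opprK b); apply: gopp. Qed.
Lemma gnegl' a b : d (- a) b -> d a b.
Proof. by move=> /gnegl; rewrite opprK. Qed.
Lemma gnegr' a b : d a (- b) -> d a b.
Proof. by move=> /gopp; rewrite opprK. Qed.
Lemma gmul2 a b c e : d a b -> d c e -> d (a * c) (b * e).
Proof. move=> h1 h2; apply: (gtrans (gmulr c h1)); exact: gmull. Qed.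
Lemma g1n n : d 1 n%:R.
Proof. elim: n => [|n IH]; first exact: g0. by rewrite -addn1 natrD; apply: gadd => //; apply: grefl. Qed.
Lemma g1z (z : int) : d 1 z%:~R.
Proof. case: z => n; first exact: g1n. by rewrite NegzE mulrNz; apply: gopp; apply: g1n. Qed.
Lemma g0mul a b : d 0 a -> d 0 (a * b).
Proof. by move=> h; have := gmulr b h; rewrite mul0r. Qed.
Lemma g0trans a b : d 0 a -> d a b -> d 0 b. Proof. exact: gtrans. Qed.
Lemma gcanc a b c : ~ d 0 c -> d (a * c) (b * c) -> d a b. Proof. exact: hcan. Qed.
Lemma gcancl a b c : ~ d 0 c -> d (c * a) (c * b) -> d a b.
Proof. by move=> h; rewrite ![c * _]mulrC; apply: hcan. Qed.
Lemma gprime a b : d 0 (a * b) -> d 0 a \/ d 0 b.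
Proof.
move=> h; case: (classic (d 0 b)) => hb; [by right|left].
by apply: (hcan hb); rewrite mul0r.
Qed.
Lemma gnzmul a b : ~ d 0 a -> ~ d 0 b -> ~ d 0 (a * b).
Proof. by move=> ha hb /gprime []. Qed.
Lemma gsuppl a c : d 0 c -> d a (a + c) /\ d (a + c) a.
Proof.
move=> h; split; first by apply: gadd; [apply: grefl| apply: gtrans (g0 a) h].
have h2 : d (a + c) c by apply: gtrans (g0 _) h.
by have := gsub (grefl (a + c)) h2; rewrite addrK.
Qed.
Lemma gstrict x y : ~ d y x -> d x (x + y) /\ d (x + y) x.
Proof.
move=> hyx.
have hxy : d x y by case: (htot x y) => //.
split; first by apply: gadd => //; apply: grefl.
case: (classic (d (x + y) x)) => // hn; exfalso.
case: (htot y (x + y)) => h2.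
- by apply: hyx; have := gsub h2 (grefl y); rewrite addrK.
- by apply: hn; have := gsub (grefl (x + y)) h2; rewrite addrK.
Qed.
Variable p : nat.
Hypothesis hp : (1 < p)%N.
Hypothesis h6 : ~ d p%:R 1.
Hypothesis hp0 : ~ d 0 p%:R.
Hypothesis h7 : forall y, d (p%:R * ((y ^+ p - y) ^+ 2 - 1)) (y ^+ p - y).

Lemma gpow1 y n : d 1 y -> d 1 (y ^+ n).
Proof.
move=> h; elim: n => [|n IH]; first exact: grefl.
by rewrite exprS -[1](mulr1 1); apply: gmul2.
Qed.

Lemma gdisc y : d 1 y -> d y p%:R -> ~ d p%:R y -> d y 1.
Proof.
move=> h1y hyp hpy; apply: NNPP => hy1.
have hy0 : ~ d 0 y by move=> h0; apply: hp0; exact: gtrans h0 hyp.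
have hnyp : ~ d (y ^+ p) y.
  move=> h; apply: hy1; apply: (gcancl hy0); rewrite mulr1.
  apply: gtrans h.
  have := gmull (y * y) (gpow1 (p - 2) h1y).
  by rewrite mulr1 -expr2 -exprD subnKC.
have hnot : ~ d (y ^+ p) (- y) by move=> h; apply: hnyp; apply: gnegr'.
have [hw1 hw2] := gstrict hnot.
have hyw : d y (y ^+ p - y) by rewrite addrC; apply: gnegl'.
have hwy : d (y ^+ p - y) y by rewrite addrC; apply: gnegr'.
have h1w2 : d 1 ((y ^+ p - y) ^+ 2 - 1).
  by apply: gsub; [apply: gpow1; apply: gtrans hyw| apply: grefl].
have hn : ~ d ((y ^+ p - y) ^+ 2) (- 1).
  move=> h; apply: hy1; apply: gtrans (gnegr' h).
  apply: gtrans (_ : d (y * y) _); first by have := gmull y h1y; rewrite mulr1.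
  by rewrite expr2; apply: gmul2.
have [_ h] := gstrict hn.
have hw21 : d ((y ^+ p - y) ^+ 2 - 1) 1 by rewrite addrC; apply: gnegr'.
apply: hpy; apply: gtrans hwy; apply: gtrans (h7 y).
by have := gmull p%:R h1w2; rewrite mulr1.
Qed.

Lemma gfermat y : d 1 y -> ~ d (y ^+ p - y) 1.
Proof.
move=> h1y hw.
have h1w : d 1 (y ^+ p - y) by apply: gsub; [apply: gpow1|].
have h1w2 : d 1 ((y ^+ p - y) ^+ 2 - 1).
  by apply: gsub; [apply: gpow1|apply: grefl].
apply: h6; apply: gtrans hw; apply: gtrans (h7 y).
by have := gmull p%:R h1w2; rewrite mulr1.
Qed.
Hypothesis pp : prime p.

Lemma gres y : d 1 y -> exists n : nat, ~ d (y - n%:R) 1.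
Proof.
move=> h1y.
have hw := gfermat h1y.
have hD : d p%:R (map_poly intr (fermatQ p)).[y].
  rewrite horner_coef; apply: big_ind; [exact: g0|move=> *; exact: gadd|].
  move=> i _; rewrite coef_map /=; have [k ->] := fermatQ_coef pp i.
  have := gpow1 i h1y; move: (y ^+ i) => z hz; clear i.
  have hkz : d 1 (k%:~R * z) by have := gmul2 (g1z k) hz; rewrite [1 * 1]mulr1.
  have := gmull p%:R hkz; rewrite [p%:R * 1]mulr1 intrM -mulrA -pmulrn; apply.
have hnD1 : ~ d (map_poly intr (fermatQ p)).[y] 1 by move=> h; apply: h6; apply: gtrans hD h.
have eprod : \prod_(i < p) (y - i%:R) = (y ^+ p - y) - (map_poly intr (fermatQ p)).[y].
  rewrite fermatQ_eval; ring.
have hP : ~ d (\prod_(i < p) (y - i%:R)) 1.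
  rewrite eprod => h; case: (htot (y ^+ p - y) (map_poly intr (fermatQ p)).[y]) => hc.
  - by apply: hw; apply: gtrans h; apply: gsub => //; apply: grefl.
  - by apply: hnD1; apply: gtrans h; apply: gsub => //; apply: grefl.
apply: NNPP => hn; apply: hP; apply: (big_ind (fun x => d x 1)); [exact: grefl| |].
  by move=> a b ha hb; have := gmul2 ha hb; rewrite [1 * 1]mulr1.
by move=> i _; apply: NNPP => hi; apply: hn; exists i.
Qed.
End Gen.

End T1.
Import T1.

Module T3.
Unset Implicit Arguments. Set Strict Implicit.
Definition pb (P : Prop) : bool := if excluded_middle_informative P then true else false.
Lemma pbP (P : Prop) : reflect P (pb P).
Proof. rewrite /pb; case: excluded_middle_informative => h; by constructor. Qed.

Section CQ.
Variable T : choiceType.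
Variable E : T -> T -> Prop.
Variable t0 : T.
Definition cr (x : T) : T := epsilon (inhabits t0) (E x).
Record cq := CQ { cqv : T; cqP : cr cqv == cqv }.

HB.instance Definition _ := [isSub for cqv].
HB.instance Definition _ := [Choice of cq by <:].

Hypothesis Erefl : forall x, E x x.
Hypothesis Esym : forall x y, E x y -> E y x.
Hypothesis Etrans : forall x y z, E x y -> E y z -> E x z.

Lemma cr_E x : E x (cr x).
Proof. exact: (epsilon_spec (inhabits t0) (E x) (ex_intro _ x (Erefl x))). Qed.
Lemma cr_eq x y : E x y -> cr x = cr y.
Proof.
move=> h; rewrite /cr; congr epsilon.
apply: functional_extensionality => z; apply: propositional_extensionality.
split => h2; [exact: Etrans _ _ _ (Esym _ _ h) h2| exact: Etrans _ _ _ h h2].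
Qed.
Lemma cr_idem x : cr (cr x) == cr x.
Proof. by apply/eqP; apply: esym; apply: cr_eq; apply: cr_E. Qed.
Definition cpi x : cq := CQ (cr x) (cr_idem x).
Lemma cpiP x y : cpi x = cpi y <-> E x y.
Proof.
split.
- move=> /(congr1 cqv) /= h.
  apply: Etrans _ _ _ (cr_E x) _; rewrite h; apply: Esym; exact: cr_E.
- by move=> h; apply: val_inj => /=; apply: cr_eq.
Qed.
Lemma cpi_val q : cpi (cqv q) = q.
Proof. by apply: val_inj => /=; apply/eqP; exact: cqP. Qed.
Lemma cqv_E x : E (cqv (cpi x)) x.
Proof. by apply: Esym; apply: cr_E. Qed.
Lemma cq_ind (P : cq -> Prop) : (forall x, P (cpi x)) -> forall q, P q.
Proof. by move=> h q; rewrite -(cpi_val q). Qed.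
End CQ.
Arguments cqv {T E t0}. Arguments CQ {T E t0}. Arguments cqP {T E t0}.

Record idealH (A : comUnitRingType) (I : A -> Prop) := IdealH {
  hI0 : I 0;
  hIsub : forall a b, I a -> I b -> I (a - b);
  hImul : forall a b, I a -> I (a * b);
  hI1 : ~ I 1;
  hIprime : forall a b, I (a * b) -> I a \/ I b }.

Section FracI.
Variable A : comUnitRingType.
Variable I : A -> Prop.
Variable H : idealH A I.
Let I0 := hI0 A I H.
Let Isub := hIsub A I H.
Let Imul := hImul A I H.
Let I1 := hI1 A I H.
Let Iprime := hIprime A I H.

Lemma Iopp a : I a -> I (- a). Proof. by move=> h; rewrite -sub0r; apply: Isub. Qed.
Lemma Iadd a b : I a -> I b -> I (a + b).
Proof. by move=> ha hb; rewrite -(opprK b); apply: Isub => //; apply: Iopp. Qed.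
Lemma Imull a b : I b -> I (a * b). Proof. by rewrite mulrC; apply: Imul. Qed.
Lemma Inz a b : ~ I a -> ~ I b -> ~ I (a * b). Proof. by move=> ha hb /Iprime []. Qed.
Lemma Ilin a b c d : I a -> I b -> I (c * a + d * b).
Proof. by move=> ha hb; apply: Iadd; apply: Imull. Qed.

Definition TT := {x : A * A | ~~ pb (I x.2)}.
Lemma den_okP b : ~~ pb (I b) <-> ~ I b.
Proof. by split; [move=> /negP h hb; apply: h; apply/pbP | move=> h; apply/negP => /pbP]. Qed.
Definition t0 : TT := exist _ (0, 1) (proj2 (den_okP 1) I1).
Definition num (x : TT) := (val x).1.
Definition den (x : TT) := (val x).2.
Lemma denP (x : TT) : ~ I (den x). Proof. by apply/den_okP; case: x. Qed.
Definition Ratio (a b : A) : TT := insubd t0 (a, b).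
Lemma RatioE a b : ~ I b -> num (Ratio a b) = a /\ den (Ratio a b) = b.
Proof. by move=> h; rewrite /num /den /Ratio val_insubd /= ifT //; apply/den_okP. Qed.
Lemma numR a b : ~ I b -> num (Ratio a b) = a. Proof. by move=> h; case: (RatioE a b h). Qed.
Lemma denR a b : ~ I b -> den (Ratio a b) = b. Proof. by move=> h; case: (RatioE a b h). Qed.

Definition EF (x y : TT) := I (num x * den y - num y * den x).
Lemma EF_refl x : EF x x. Proof. by rewrite /EF subrr. Qed.
Lemma EF_sym x y : EF x y -> EF y x.
Proof. by rewrite /EF => h; rewrite -opprB; apply: Iopp. Qed.
Lemma EF_trans x y z : EF x y -> EF y z -> EF x z.
Proof.
rewrite /EF => h1 h2.
have : I (den y * (num x * den z - num z * den x)).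
  have -> : den y * (num x * den z - num z * den x) =
    den z * (num x * den y - num y * den x) + den x * (num y * den z - num z * den y) by ring.
  exact: Ilin.
by case/Iprime => // /denP.
Qed.
Lemma EF_of x y : num x * den y = num y * den x -> EF x y.
Proof. by rewrite /EF => ->; rewrite subrr. Qed.

Definition FQ := cq TT EF t0.
HB.instance Definition _ := Choice.on FQ.

Local Notation cpiF := (@cpi TT EF t0 EF_refl EF_sym EF_trans).
Lemma cpiFP x y : cpiF x = cpiF y <-> EF x y.
Proof. exact: cpiP. Qed.
Lemma cqvF x : EF (cqv (cpiF x)) x. Proof. exact: cqv_E. Qed.
Lemma FQ_ind (P : FQ -> Prop) : (forall x, P (cpiF x)) -> forall q, P q.
Proof. exact: cq_ind. Qed.

Definition addT x y := Ratio (num x * den y + num y * den x) (den x * den y).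
Definition oppT x := Ratio (- num x) (den x).
Definition mulT x y := Ratio (num x * num y) (den x * den y).
Definition invT x := Ratio (den x) (num x).

Lemma dd x y : ~ I (den x * den y). Proof. by apply: Inz; apply: denP. Qed.

Lemma addT_E x x' y y' : EF x x' -> EF y y' -> EF (addT x y) (addT x' y').
Proof.
rewrite /EF /addT !numR ?denR; try exact: dd.
move=> h1 h2.
have -> : (num x * den y + num y * den x) * (den x' * den y') -
  (num x' * den y' + num y' * den x') * (den x * den y) =
  (den y * den y') * (num x * den x' - num x' * den x) +
  (den x * den x') * (num y * den y' - num y' * den y) by ring.
exact: Ilin.
Qed.
Lemma oppT_E x x' : EF x x' -> EF (oppT x) (oppT x').
Proof.
rewrite /EF /oppT !numR ?denR; try exact: denP.
by move=> h; rewrite !mulNr -opprD; apply: Iopp.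
Qed.
Lemma mulT_E x x' y y' : EF x x' -> EF y y' -> EF (mulT x y) (mulT x' y').
Proof.
rewrite /EF /mulT !numR ?denR; try exact: dd.
move=> h1 h2.
have -> : (num x * num y) * (den x' * den y') - (num x' * num y') * (den x * den y) =
  (num y * den y') * (num x * den x' - num x' * den x) +
  (num x' * den x) * (num y * den y' - num y' * den y) by ring.
exact: Ilin.
Qed.
Lemma invT_E x x' : EF x x' -> EF (invT x) (invT x').
Proof.
move=> h; rewrite /invT.
case: (classic (I (num x))) => hx.
- have hx' : I (num x').
    have : I (num x' * den x).
      have -> : num x' * den x = num x * den x' - (num x * den x' - num x' * den x) by ring.
      by apply: Isub => //; apply: Imul.
    by case/Iprime => // /denP.
  have e1 : Ratio (den x) (num x) = t0.
    by rewrite /Ratio /insubd insubN //; apply/negPn/pbP.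
  have e2 : Ratio (den x') (num x') = t0.
    by rewrite /Ratio /insubd insubN //; apply/negPn/pbP.
  by rewrite e1 e2; apply: EF_refl.
- have hx' : ~ I (num x').
    move=> hx'; apply: hx.
    have : I (num x * den x').
      have -> : num x * den x' = (num x * den x' - num x' * den x) + num x' * den x by ring.
      by apply: Iadd => //; apply: Imul.
    by case/Iprime => // /denP.
  rewrite /EF !numR ?denR //.
  have -> : den x * num x' - den x' * num x = - (num x * den x' - num x' * den x) by ring.
  exact: Iopp.
Qed.

Definition zeroF : FQ := cpiF t0.
Definition oneF : FQ := cpiF (Ratio 1 1).
Definition addF (q r : FQ) : FQ := cpiF (addT (cqv q) (cqv r)).
Definition oppF (q : FQ) : FQ := cpiF (oppT (cqv q)).
Definition mulF (q r : FQ) : FQ := cpiF (mulT (cqv q) (cqv r)).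
Definition invF (q : FQ) : FQ := cpiF (invT (cqv q)).

Lemma addF_pi x y : addF (cpiF x) (cpiF y) = cpiF (addT x y).
Proof. by apply/cpiFP; apply: addT_E; apply: cqvF. Qed.
Lemma oppF_pi x : oppF (cpiF x) = cpiF (oppT x).
Proof. by apply/cpiFP; apply: oppT_E; apply: cqvF. Qed.
Lemma mulF_pi x y : mulF (cpiF x) (cpiF y) = cpiF (mulT x y).
Proof. by apply/cpiFP; apply: mulT_E; apply: cqvF. Qed.
Lemma invF_pi x : invF (cpiF x) = cpiF (invT x).
Proof. by apply/cpiFP; apply: invT_E; apply: cqvF. Qed.

Lemma nd1 : ~ I 1. Proof. exact: I1. Qed.

Lemma num_add x y : num (addT x y) = num x * den y + num y * den x. Proof. by rewrite numR //; apply: dd. Qed.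
Lemma den_add x y : den (addT x y) = den x * den y. Proof. by rewrite denR //; apply: dd. Qed.
Lemma num_mul x y : num (mulT x y) = num x * num y. Proof. by rewrite numR //; apply: dd. Qed.
Lemma den_mul x y : den (mulT x y) = den x * den y. Proof. by rewrite denR //; apply: dd. Qed.
Lemma num_opp x : num (oppT x) = - num x. Proof. by rewrite numR //; apply: denP. Qed.
Lemma den_opp x : den (oppT x) = den x. Proof. by rewrite denR //; apply: denP. Qed.
Lemma num_t0 : num t0 = 0. Proof. by []. Qed.
Lemma den_t0 : den t0 = 1. Proof. by []. Qed.
Lemma num_R1 a : num (Ratio a 1) = a. Proof. by rewrite numR. Qed.
Lemma den_R1 a : den (Ratio a 1) = 1. Proof. by rewrite denR. Qed.
Definition nd_simp := (num_add, den_add, num_mul, den_mul, num_opp, den_opp, num_t0, den_t0, num_R1, den_R1).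

Lemma addFA : associative addF.
Proof.
elim/FQ_ind => x; elim/FQ_ind => y; elim/FQ_ind => z; rewrite !addF_pi.
by apply/cpiFP; apply: EF_of; rewrite !nd_simp; ring.
Qed.
Lemma addFC : commutative addF.
Proof.
elim/FQ_ind => x; elim/FQ_ind => y; rewrite !addF_pi.
by apply/cpiFP; apply: EF_of; rewrite !nd_simp; ring.
Qed.
Lemma add0F : left_id zeroF addF.
Proof.
elim/FQ_ind => x; rewrite /zeroF !addF_pi.
by apply/cpiFP; apply: EF_of; rewrite !nd_simp; ring.
Qed.
Lemma addNF : left_inverse zeroF oppF addF.
Proof.
elim/FQ_ind => x; rewrite /zeroF oppF_pi !addF_pi.
by apply/cpiFP; apply: EF_of; rewrite !nd_simp; ring.
Qed.
HB.instance Definition _ := GRing.isZmodule.Build FQ addFA addFC add0F addNF.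

Lemma mulFA : associative mulF.
Proof.
elim/FQ_ind => x; elim/FQ_ind => y; elim/FQ_ind => z; rewrite !mulF_pi.
by apply/cpiFP; apply: EF_of; rewrite !nd_simp; ring.
Qed.
Lemma mulFC : commutative mulF.
Proof.
elim/FQ_ind => x; elim/FQ_ind => y; rewrite !mulF_pi.
by apply/cpiFP; apply: EF_of; rewrite !nd_simp; ring.
Qed.
Lemma mul1F : left_id oneF mulF.
Proof.
elim/FQ_ind => x; rewrite /oneF !mulF_pi.
by apply/cpiFP; apply: EF_of; rewrite !nd_simp; ring.
Qed.
Lemma mulFDl : left_distributive mulF addF.
Proof.
elim/FQ_ind => x; elim/FQ_ind => y; elim/FQ_ind => z.
rewrite addF_pi !mulF_pi addF_pi.
by apply/cpiFP; apply: EF_of; rewrite !nd_simp; ring.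
Qed.
Lemma oneF_neq0 : oneF != zeroF.
Proof.
apply/eqP; rewrite /oneF /zeroF => /cpiFP; rewrite /EF !nd_simp.
by rewrite mulr1 mul0r subr0.
Qed.
HB.instance Definition _ := GRing.Zmodule_isComNzRing.Build FQ mulFA mulFC mul1F mulFDl oneF_neq0.

Lemma mulVF : forall q : FQ, q != 0 -> mulF (invF q) q = oneF.
Proof.
elim/FQ_ind => x hx; rewrite invF_pi mulF_pi /oneF.
have hx' : ~ I (num x).
  move=> h; apply/negP: hx; apply/negPn/eqP; apply/cpiFP.
  by rewrite /EF num_t0 den_t0 mul0r mulr1 subr0.
apply/cpiFP; apply: EF_of; rewrite /invT num_mul den_mul (numR _ _ hx') (denR _ _ hx') !nd_simp; ring.
Qed.
Lemma invF0 : invF 0 = 0.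
Proof.
have e : invT t0 = t0 by rewrite /invT /Ratio /insubd insubN //=; apply/negPn/pbP.
by rewrite /= /zeroF invF_pi e.
Qed.
HB.instance Definition _ := GRing.ComNzRing_isField.Build FQ mulVF invF0.

Lemma piD x y : (cpiF x : FQ) + (cpiF y : FQ) = cpiF (addT x y) :> FQ. Proof. exact: addF_pi. Qed.
Lemma piN x : - (cpiF x : FQ) = cpiF (oppT x) :> FQ. Proof. exact: oppF_pi. Qed.
Lemma piM x y : (cpiF x : FQ) * (cpiF y : FQ) = cpiF (mulT x y) :> FQ. Proof. exact: mulF_pi. Qed.
Lemma piV x : (cpiF x : FQ)^-1 = cpiF (invT x) :> FQ. Proof. exact: invF_pi. Qed.

Definition phiF (a : A) : FQ := cpiF (Ratio a 1).
Lemma phiF_zmod : zmod_morphism phiF.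
Proof.
move=> a b; rewrite /phiF piN piD; apply/cpiFP; apply: EF_of; rewrite !nd_simp; ring.
Qed.
HB.instance Definition _ := GRing.isZmodMorphism.Build A FQ phiF phiF_zmod.
Lemma phiF_monoid : monoid_morphism phiF.
Proof.
split=> [//|a b]; rewrite /phiF piM; apply/cpiFP; apply: EF_of; rewrite !nd_simp; ring.
Qed.
HB.instance Definition _ := GRing.isMonoidMorphism.Build A FQ phiF phiF_monoid.

Lemma phiF_ker a : phiF a = 0 <-> I a.
Proof.
rewrite /phiF -[0]/zeroF /zeroF; split.
- by move/cpiFP; rewrite /EF !nd_simp mulr1 mul0r subr0.
- by move=> h; apply/cpiFP; rewrite /EF !nd_simp mulr1 mul0r subr0.
Qed.

Lemma phiF_frac (q : FQ) : exists a b, phiF b != 0 /\ q = phiF a / phiF b.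
Proof.
elim/FQ_ind: q => x; exists (num x), (den x); split.
- by apply/eqP => /phiF_ker; apply: denP.
- rewrite /phiF piV piM; apply/cpiFP; apply: EF_of.
  rewrite /invT num_mul den_mul !nd_simp (numR _ _ (denP x)) (denR _ _ (denP x)); ring.
Qed.
End FracI.

End T3.
Import T3.

Module T4.
Unset Implicit Arguments. Set Strict Implicit.
Record tdiv (R : comUnitRingType) (d : R -> R -> Prop) := TDiv {
  td_div : divisibility d; td_tot : total_rel d; td_can : cancellation d }.

Section VG.
Variable F : fieldType.
Variable d : F -> F -> Prop.
Variable H : tdiv F d.
Let hd := td_div F d H.
Let htot := td_tot F d H.
Let hcan := td_can F d H.
Local Notation grefl := (@T1.grefl _ _ hd).
Local Notation gtrans := (@T1.gtrans _ _ hd).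
Local Notation gmul2 := (@T1.gmul2 _ _ hd).
Local Notation gmulr := (@T1.gmulr _ _ hd).
Local Notation gmull := (@T1.gmull _ _ hd).
Local Notation gadd := (@T1.gadd _ _ hd).

Definition nz (x : F) : F := if x == 0 then 1 else x.
Lemma nz_neq0 x : nz x != 0. Proof. rewrite /nz; have [e|h] := eqVneq x 0; [exact: oner_neq0 | exact: h]. Qed.
Lemma nz_id x : x != 0 -> nz x = x. Proof. by rewrite /nz => /negPf ->. Qed.
Lemma nz_nz x : nz (nz x) = nz x. Proof. by apply: nz_id; apply: nz_neq0. Qed.

Definition EG (x y : F) := d (nz x) (nz y) /\ d (nz y) (nz x).
Lemma EG_refl x : EG x x. Proof. by split; apply: grefl. Qed.
Lemma EG_sym x y : EG x y -> EG y x. Proof. by case. Qed.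
Lemma EG_trans x y z : EG x y -> EG y z -> EG x z.
Proof. by move=> [h1 h2] [h3 h4]; split; apply: gtrans; eauto. Qed.

Definition gt0 : F := let _ := H in 0.
Definition GV := cq F EG gt0.
HB.instance Definition _ := Choice.on GV.
Local Notation cpiG := (@cpi F EG gt0 EG_refl EG_sym EG_trans).

Lemma GV_ind (P : GV -> Prop) : (forall x, P (cpiG x)) -> forall g, P g.
Proof. exact: (cq_ind _ _ _ EG_refl EG_sym EG_trans). Qed.

Definition zeroG : GV := cpiG 1.
Definition addG (g h : GV) : GV := cpiG (nz (cqv g) * nz (cqv h)).
Definition oppG (g : GV) : GV := cpiG ((nz (cqv g))^-1).

Lemma EG_mul x x' y y' : EG x x' -> EG y y' -> EG (nz x * nz y) (nz x' * nz y').
Proof.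
move=> [h1 h2] [h3 h4].
rewrite /EG (nz_id _ (mulf_neq0 (nz_neq0 x) (nz_neq0 y))) (nz_id _ (mulf_neq0 (nz_neq0 x') (nz_neq0 y'))).
by split; apply: gmul2.
Qed.
Lemma EG_inv x x' : EG x x' -> EG ((nz x)^-1) ((nz x')^-1).
Proof.
have key : forall a b, a != 0 -> b != 0 -> d a b -> d (b^-1) (a^-1).
  move=> a b ha hb h; have := gmulr (a^-1 * b^-1) h.
  have -> : a * (a^-1 * b^-1) = b^-1 by rewrite mulrA mulfV // mul1r.
  by have -> : b * (a^-1 * b^-1) = a^-1 by rewrite mulrCA mulfV // mulr1.
move=> [h1 h2].
have i1 : (nz x)^-1 != 0 by rewrite invr_eq0 nz_neq0.
have i2 : (nz x')^-1 != 0 by rewrite invr_eq0 nz_neq0.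
rewrite /EG (nz_id _ i1) (nz_id _ i2).
by split; apply: key => //; apply: nz_neq0.
Qed.
Lemma EG_nz x : EG (nz x) x. Proof. by rewrite /EG nz_nz; split; apply: grefl. Qed.

Lemma addG_pi x y : addG (cpiG x) (cpiG y) = cpiG (nz x * nz y).
Proof. by apply/cpiP; apply: EG_mul; apply: cqv_E. Qed.
Lemma oppG_pi x : oppG (cpiG x) = cpiG ((nz x)^-1).
Proof. by apply/cpiP; apply: EG_inv; apply: cqv_E. Qed.
Lemma cpiG_nz x : cpiG (nz x) = cpiG x. Proof. by apply/cpiP; apply: EG_nz. Qed.

Lemma addGA : associative addG.
Proof.
elim/GV_ind => x; elim/GV_ind => y; elim/GV_ind => z; rewrite !addG_pi.
rewrite (nz_id _ (mulf_neq0 (nz_neq0 x) (nz_neq0 y))) (nz_id _ (mulf_neq0 (nz_neq0 y) (nz_neq0 z))).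
by rewrite mulrA.
Qed.
Lemma addGC : commutative addG.
Proof. by elim/GV_ind => x; elim/GV_ind => y; rewrite !addG_pi mulrC. Qed.
Lemma add0G : left_id zeroG addG.
Proof.
elim/GV_ind => x; rewrite /zeroG addG_pi (nz_id _ (oner_neq0 F)) mul1r.
exact: cpiG_nz.
Qed.
Lemma addNG : left_inverse zeroG oppG addG.
Proof.
elim/GV_ind => x; rewrite oppG_pi addG_pi /zeroG.
have i1 : (nz x)^-1 != 0 by rewrite invr_eq0 nz_neq0.
by rewrite (nz_id _ i1) mulVf // nz_neq0.
Qed.
HB.instance Definition _ := GRing.isZmodule.Build GV addGA addGC add0G addNG.

Definition vG (x : F) : GV := cpiG x.
Definition leG (g h : GV) : Prop := d (nz (cqv g)) (nz (cqv h)).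

Lemma leG_v x y : leG (vG x) (vG y) <-> d (nz x) (nz y).
Proof.
rewrite /leG /vG; have [h1 h2] := @cqv_E F EG gt0 EG_refl EG_sym EG_trans x.
have [h3 h4] := @cqv_E F EG gt0 EG_refl EG_sym EG_trans y.
split => h; [apply: gtrans h2 _; apply: gtrans h h3| apply: gtrans h1 _; apply: gtrans h h4].
Qed.
Lemma vG_eq x y : vG x = vG y <-> EG x y. Proof. exact: cpiP. Qed.
Lemma vG_ind (P : GV -> Prop) : (forall x, P (vG x)) -> forall g, P g.
Proof. exact: GV_ind. Qed.
Lemma vG0 : (0 : GV) = vG 1. Proof. by []. Qed.
Lemma vGD x y : vG x + vG y = vG (nz x * nz y). Proof. exact: addG_pi. Qed.

Lemma leG_oag : ordered_abelian_group leG.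
Proof.
split.
- by elim/vG_ind => x; apply/leG_v; apply: grefl.
- by elim/vG_ind => x; elim/vG_ind => y => /leG_v h1 /leG_v h2; apply/vG_eq.
- elim/vG_ind => x; elim/vG_ind => y; elim/vG_ind => z => /leG_v h1 /leG_v h2.
  by apply/leG_v; apply: gtrans h2.
- by elim/vG_ind => x; elim/vG_ind => y; case: (htot (nz x) (nz y)) => h; [left|right]; apply/leG_v.
- elim/vG_ind => x; elim/vG_ind => y; elim/vG_ind => z => /leG_v h.
  rewrite !vGD; apply/leG_v.
  rewrite (nz_id _ (mulf_neq0 (nz_neq0 x) (nz_neq0 z))) (nz_id _ (mulf_neq0 (nz_neq0 y) (nz_neq0 z))).
  exact: gmulr.
Qed.

Lemma leG_nz x y : x != 0 -> y != 0 -> (leG (vG x) (vG y) <-> d x y).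
Proof. by move=> hx hy; rewrite leG_v !nz_id. Qed.
Lemma vG_eq_nz x y : x != 0 -> y != 0 -> (vG x = vG y <-> d x y /\ d y x).
Proof. by move=> hx hy; rewrite vG_eq /EG !nz_id. Qed.

Lemma vG_valuation : valuation leG vG.
Proof.
split.
- by move=> x y hx hy; rewrite vGD !nz_id.
- move=> x y hx hy hxy; rewrite !leG_nz //.
  case: (htot x y) => h; [left|right]; apply: gadd; try apply: grefl; try done.
Qed.
End VG.

End T4.
Import T4.

Module T2.
Unset Implicit Arguments. Set Strict Implicit.
Lemma find_step (Q : int -> Prop) m N : Q m -> ~ Q N ->
  (forall j k, (j <= k)%R -> Q k -> Q j) -> exists n, Q n /\ ~ Q (n + 1).
Proof.
move=> hm hN hdown.
have hmN : (m < N)%R.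
  case: (lerP N m) => // hNm; exfalso; apply: hN; exact: hdown _ _ hNm hm.
suff H : forall k : nat, forall m, Q m -> ~ Q (m + k%:Z) -> exists n, Q n /\ ~ Q (n + 1).
  apply: (H `|N - m|%N m hm); rewrite gez0_abs; last by rewrite subr_ge0 ltW.
  by have -> : m + (N - m) = N by lia.
elim=> [|k IH] m' hm' hk; first by exfalso; apply: hk; rewrite addr0.
case: (classic (Q (m' + 1))) => h; last by exists m'.
apply: (IH _ h); have -> : m' + 1 + k%:Z = m' + k.+1%:Z by lia.
done.
Qed.

Section ALevel.
Variable p : nat.
Variable A : comUnitRingType.
Variable dv0 dv : A -> A -> Prop.
Hypothesis pp : prime p.
Hypothesis hQ : forall n : nat, (n.+1)%:R \is a @GRing.unit A.
Hypothesis hd0 : p_divisibility p dv0.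
Hypothesis harch : p_archimedean p dv0.
Hypothesis hS : in_SpecDp p dv0 dv.

Lemma hS_div : divisibility dv. Proof. by case: hS => [[]]. Qed.
Lemma hS_tot : total_rel dv. Proof. by case: hS. Qed.
Lemma hS_can : cancellation dv. Proof. by case: hS. Qed.
Lemma hS_sub : rel_sub dv0 dv. Proof. by case: hS. Qed.
Lemma hS_6 : forall a, ~ dv 0 a -> ~ dv (p%:R * a) a. Proof. by case: hS => [[]]. Qed.
Lemma hS_7 a b : dv (p%:R * ((a ^+ p * b - b ^+ p * a) ^+ 2 - (b ^+ p.+1) ^+ 2))
           ((a ^+ p * b - b ^+ p * a) * b ^+ p.+1).
Proof. by case: hS => [[]]. Qed.

Local Notation hdv := hS_div.
Local Notation grefl := (@T1.grefl _ _ hS_div).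
Local Notation gtrans := (@T1.gtrans _ _ hS_div).
Local Notation gsub := (@T1.gsub _ _ hS_div).
Local Notation gmulr := (@T1.gmulr _ _ hS_div).
Local Notation g01 := (@T1.g01 _ _ hS_div).
Local Notation g0 := (@T1.g0 _ _ hS_div).
Local Notation gopp := (@T1.gopp _ _ hS_div).
Local Notation gadd := (@T1.gadd _ _ hS_div).
Local Notation gmull := (@T1.gmull _ _ hS_div).
Local Notation gnegl := (@T1.gnegl _ _ hS_div).
Local Notation gnegl' := (@T1.gnegl' _ _ hS_div).
Local Notation gnegr' := (@T1.gnegr' _ _ hS_div).
Local Notation gmul2 := (@T1.gmul2 _ _ hS_div).
Local Notation g1n := (@T1.g1n _ _ hS_div).
Local Notation g1z := (@T1.g1z _ _ hS_div).
Local Notation g0mul := (@T1.g0mul _ _ hS_div).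
Local Notation g0trans := (@T1.g0trans _ _ hS_div).
Local Notation gsuppl := (@T1.gsuppl _ _ hS_div).
Local Notation gpow1 := (@T1.gpow1 _ _ hS_div).
Local Notation gcanc := (@T1.gcanc _ _ hS_can).
Local Notation gcancl := (@T1.gcancl _ _ hS_can).
Local Notation gprime := (@T1.gprime _ _ hS_can).
Local Notation gnzmul := (@T1.gnzmul _ _ hS_can).
Local Notation gstrict := (@T1.gstrict _ _ hS_div hS_tot).

Lemma hp : (1 < p)%N. Proof. exact: prime_gt1. Qed.
Lemma pu : (p%:R : A) \is a GRing.unit.
Proof. by rewrite -(prednK (prime_gt0 pp)); apply: hQ. Qed.

Definition P (n : int) : A := (p%:R : A) ^ n.
Lemma PD m n : P (m + n) = P m * P n. Proof. exact: (exprzDr pu). Qed.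
Lemma P0 : P 0 = 1. Proof. exact: expr0z. Qed.
Lemma P1 : P 1 = p%:R. Proof. exact: expr1z. Qed.
Lemma PN n : P n * P (- n) = 1. Proof. by rewrite -PD subrr P0. Qed.
Lemma Pnz n : ~ dv 0 (P n).
Proof. move=> h; apply: (g01); rewrite -(PN n); exact: g0mul. Qed.
Lemma h6' : ~ dv p%:R 1.
Proof. by have := hS_6 1 g01; rewrite mulr1. Qed.
Lemma hp0' : ~ dv 0 p%:R. Proof. by rewrite -P1; apply: Pnz. Qed.
Lemma h7' y : dv (p%:R * ((y ^+ p - y) ^+ 2 - 1)) (y ^+ p - y).
Proof. by have := hS_7 y 1; rewrite !(expr1n, mulr1, mul1r). Qed.
Lemma d1p : dv 1 p%:R. Proof. exact: g1n. Qed.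

Lemma dPle m n : (m <= n)%R -> dv (P m) (P n).
Proof.
move=> h; have -> : n = m + (n - m) by rewrite addrC subrK.
rewrite PD; have := gmull (P m) (_ : dv 1 (P (n - m))); rewrite mulr1; apply.
have : (0 <= n - m)%R by rewrite subr_ge0.
rewrite /P; case: (n - m) => // k _; exact: gpow1 _ d1p.
Qed.

Lemma dPle_iff m n : dv (P m) (P n) <-> (m <= n)%R.
Proof.
split; last exact: dPle.
move=> h; case: (lerP m n) => // hnm; exfalso.
have h2 : dv (P (n + 1)) (P m) by apply: dPle; lia.
have h3 : dv (P n * p%:R) (P n * 1) by rewrite mulr1 -P1 -PD; exact: gtrans h2 h.
exact: h6' (gcancl (Pnz n) h3).
Qed.

Lemma supp_prime : prime_ideal (div_support dv).
Proof.
split; rewrite /div_support.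
- exact: grefl.
- by move=> a b; apply: gsub.
- by move=> a b; apply: g0mul.
- exact: g01.
- by move=> a b; apply: gprime.
Qed.

Definition J b := forall n : int, dv (P n) b.
Definition dv' a b := dv a b \/ J b.

Lemma dv'_aux a b c : dv' a b -> dv' a c -> ~ J c -> dv a b.
Proof.
move=> [h|Jb] hac nJc //.
have hac' : dv a c by case: hac.
case: (hS_tot a b) => // hba; exfalso; apply: nJc => n.
exact: gtrans (gtrans (Jb n) hba) hac'.
Qed.

Lemma dv'_spec : in_SpecDp p dv0 dv'.
Proof.
split.
- split.
  + split.
    * by move=> a; left; apply: grefl.
    * move=> a b c [hab|Jb] [hbc|Jc]; try (by right).
      - by left; apply: gtrans hbc.
      - by right => n; apply: gtrans (Jb n) hbc.
    * move=> a b c hab hac.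
      case: (classic (J (b - c))) => hJ; first by right.
      left; case: (classic (J c)) => hJc.
      - have hJb : ~ J b by move=> hJb; apply: hJ => n; apply: gsub.
        apply: gsub; first by case: hab.
        exact: dv'_aux hac hab hJb.
      - apply: gsub; first exact: dv'_aux hab hac hJc.
        by case: hac.
    * move=> a b c [h|Jb]; first by left; apply: gmulr.
      right => n; have [m hm] := harch c.
      have hm' : dv (P m) c by apply: hS_sub.
      by rewrite -(subrK m n) PD; apply: gmul2.
    * case=> [h|J1]; first exact: g01 h.
      by apply: h6'; rewrite -P1; apply: J1.
  + move=> a h0 [h|Ja].
    * by apply: (hS_6 a _ h) => h1; apply: h0; left.
    * by apply: h0; right.
  + by move=> a b; left; apply: hS_7.
- by move=> a b; case: (hS_tot a b) => h; [left|right]; left.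
- move=> a b c h0 [h|Jbc].
  + by left; apply: hS_can h => h1; apply: h0; left.
  + right => n.
    have nJc : ~ J c by move=> h1; apply: h0; right.
    have [m hm] := not_all_ex_not _ _ nJc.
    have hcm : dv c (P m) by case: (hS_tot c (P m)).
    apply: (gcanc (Pnz m)); rewrite -PD.
    apply: gtrans (Jbc (n + m)) _; exact: gmull.
- by move=> a b h; left; apply: hS_sub.
Qed.

Lemma fwd_J : maximal_in_SpecDp p dv0 dv -> forall b, J b -> dv 0 b.
Proof.
move=> [_ hmax] b Jb.
have := hmax dv' dv'_spec (fun a b h => or_introl h) 0 b (or_intror Jb); done.
Qed.

Lemma fwd_val : (forall b, J b -> dv 0 b) -> forall a, ~ dv 0 a ->
  exists n, dv (P n) a /\ dv a (P n).
Proof.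
move=> hJ a ha.
have [m hm] := harch a.
have hm' : dv (P m) a by apply: hS_sub.
have nJa : ~ J a by move=> h; apply: ha; apply: hJ.
have [N hN] := not_all_ex_not _ _ nJa.
have [n [hn1 hn2]] := find_step (fun n => dv (P n) a) m N hm' hN
  (fun j k hjk hk => gtrans (dPle j k hjk) hk).
exists n; split => //.
have ha2 : dv a (P (n + 1)) by case: (hS_tot a (P (n + 1))).
have h1y : dv 1 (a * P (- n)) by rewrite -(PN n); apply: gmulr.
have hyp : dv (a * P (- n)) p%:R.
  have e : P 1 = P (n + 1) * P (- n) by rewrite -PD addrAC subrr add0r.
  by rewrite -P1 e; apply: gmulr.
have hpy : ~ dv p%:R (a * P (- n)).
  move=> h; apply: hn2; have := gmulr (P n) h.
  by rewrite -P1 -PD -mulrA [P (- n) * _]mulrC PN mulr1 addrC.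
have := gdisc hS_div hS_tot hS_can hp hp0' h7' h1y hyp hpy.
move=> /(gmulr (P n)); by rewrite -mulrA [P (- n) * _]mulrC PN mulr1 mul1r.
Qed.

Lemma fwd_main : maximal_in_SpecDp p dv0 dv ->
  forall (F : fieldType) (phi : {rmorphism A -> F})
         (G : zmodType) (le : G -> G -> Prop) (v : F -> G),
    is_quot_field_of_quotient (div_support dv) phi ->
    ordered_abelian_group le ->
    p_valuation p le v ->
    corresponds dv phi le v ->
    value_group_is_Z le v.
Proof.
move=> hmax F phi G le v [hker hfrac] hog hpv hc.
have hval := fwd_val (fwd_J hmax).
case: hog => lrefl lanti ltrans ltot ltransl.
case: hpv => _ [hvm _] _ _ _.
have phinz : forall a, ~ dv 0 a -> phi a != 0.
  by move=> a ha; apply/eqP => /hker.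
have vle_iff : forall a b, ~ dv 0 a -> ~ dv 0 b -> (dv a b <-> le (v (phi a)) (v (phi b))).
  move=> a b ha hb; rewrite hc /vle; split.
  - by case=> [/eqP|[]//]; rewrite (negPf (phinz _ hb)).
  - by move=> h; right; split => //; apply: phinz.
pose f n := v (phi (P n)).
have fD : forall m n, f (m + n) = f m + f n.
  by move=> m n; rewrite /f PD rmorphM hvm //; apply: phinz; apply: Pnz.
have vP : forall a, ~ dv 0 a -> exists n, v (phi a) = f n.
  move=> a ha; have [n [h1 h2]] := hval a ha; exists n.
  by apply: lanti; [apply/vle_iff => //; apply: Pnz|apply/vle_iff => //; apply: Pnz].
exists f; split.
- exact: fD.
- by move=> m n; rewrite -(vle_iff _ _ (Pnz m) (Pnz n)) dPle_iff.
- move=> x hx; have [a [b [hb hx']]] := hfrac x.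
  have ha : phi a != 0 by apply: contraNneq hx => ha; rewrite hx' ha mul0r.
  have ha' : ~ dv 0 a by move=> /hker /eqP; apply/negP.
  have hb' : ~ dv 0 b by move=> /hker /eqP; apply/negP.
  have [m hm] := vP a ha'; have [k hk] := vP b hb'.
  exists (m - k); apply: (addIr (f k)); rewrite -fD subrK -hm -hk -hvm //.
  by rewrite hx' divfK.
- by move=> n; exists (phi (P n)); split => //; apply: phinz; apply: Pnz.
Qed.


Set Implicit Arguments. Unset Strict Implicit.
Lemma unit_nI u : u \is a GRing.unit -> ~ dv 0 u.
Proof. by move=> hu h; apply: g01; rewrite -(mulrV hu); apply: g0mul. Qed.

Lemma dv_congr x y x' y' : dv x y -> dv 0 (x - x') -> dv 0 (y - y') -> dv x' y'.
Proof.
move=> h h1 h2.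
have e1 : dv x' x.
  have [hh _] := @T1.gsuppl _ _ hS_div x' (x - x') h1; by rewrite addrC subrK in hh.
have e2 : dv y y'.
  have h3 : dv 0 (y' - y) by rewrite -opprB; apply: gopp.
  have [hh _] := @T1.gsuppl _ _ hS_div y (y' - y) h3; by rewrite addrC subrK in hh.
exact: gtrans e1 (gtrans h e2).
Qed.

Lemma dvR x y x' y' : dv x y -> x = x' -> y = y' -> dv x' y'.
Proof. by move=> h <- <-. Qed.

Section VF.
Variable F : fieldType.
Variable phi : {rmorphism A -> F}.
Hypothesis hq : is_quot_field_of_quotient (div_support dv) phi.

Lemma hker a : phi a = 0 <-> dv 0 a. Proof. by case: hq. Qed.
Lemma phinz b : ~ dv 0 b -> phi b != 0. Proof. by move=> hb; apply/eqP => /hker. Qed.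
Lemma has_rep x : exists a b, ~ dv 0 b /\ x = phi a / phi b.
Proof.
case: hq => _ hf; have [a [b [hb hx]]] := hf x; exists a, b; split => //.
by move=> /hker /eqP; apply/negP.
Qed.

Definition vleF (x y : F) := exists a b c e, [/\ ~ dv 0 b, ~ dv 0 e, x = phi a / phi b,
  y = phi c / phi e & dv (a * e) (c * b)].

Lemma rep_eq a b a' b' : ~ dv 0 b -> ~ dv 0 b' -> phi a / phi b = phi a' / phi b' ->
  dv 0 (a * b' - a' * b).
Proof.
move=> hb hb' /eqP; rewrite eqr_div ?phinz // => /eqP e.
by apply/hker; rewrite rmorphB !rmorphM e subrr.
Qed.

Lemma vleF_all x y : vleF x y -> forall a b c e, ~ dv 0 b -> ~ dv 0 e ->
  x = phi a / phi b -> y = phi c / phi e -> dv (a * e) (c * b).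
Proof.
move=> [a0 [b0 [c0 [e0 [hb0 he0 hx hy h]]]]] a b c e hb he hx' hy'.
have r1 := rep_eq hb0 hb (etrans (esym hx) hx').
have r2 := rep_eq he0 he (etrans (esym hy) hy').
have h1 := gmulr (b * e) h.
have h2 : dv (a * e * (b0 * e0)) (c * b * (b0 * e0)).
  apply: (dv_congr h1).
  - have -> : a0 * e0 * (b * e) - a * e * (b0 * e0) = (a0 * b - a * b0) * (e0 * e) by ring.
    exact: g0mul r1.
  - have -> : c0 * b0 * (b * e) - c * b * (b0 * e0) = (c0 * e - c * e0) * (b0 * b) by ring.
    exact: g0mul r2.
exact: gcanc (gnzmul hb0 he0) h2.
Qed.

Lemma vleF_intro a b c e : ~ dv 0 b -> ~ dv 0 e -> dv (a * e) (c * b) ->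
  vleF (phi a / phi b) (phi c / phi e).
Proof. by move=> hb he h; exists a, b, c, e; split. Qed.

Lemma phi_frac1 a : phi a = phi a / phi 1. Proof. by rewrite rmorph1 divr1. Qed.
Lemma n1 : ~ dv 0 1. Proof. exact: g01. Qed.

Lemma vleF_phi a b : vleF (phi a) (phi b) <-> dv a b.
Proof.
split.
- move=> h; have := vleF_all h n1 n1 (phi_frac1 a) (phi_frac1 b); by rewrite !mulr1.
- by move=> h; rewrite (phi_frac1 a) (phi_frac1 b); apply: vleF_intro n1 n1 _; rewrite !mulr1.
Qed.

Lemma fracM a b c e : phi b != 0 -> phi e != 0 ->
  (phi a / phi b) * (phi c / phi e) = phi (a * c) / phi (b * e).
Proof. by move=> hb he; rewrite !rmorphM invfM mulrACA. Qed.

Lemma fracB a b c e : phi b != 0 -> phi e != 0 ->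
  (phi a / phi b) - (phi c / phi e) = phi (a * e - c * b) / phi (b * e).
Proof.
move=> hb he; rewrite rmorphB !rmorphM; field.
by rewrite hb he.
Qed.

Lemma vleF0 x : vleF 0 x -> x = 0.
Proof.
move=> h; have [a [b [hb hx]]] := has_rep x.
have e0 : (0 : F) = phi 0 / phi 1 by rewrite rmorph0 mul0r.
have := vleF_all h n1 hb e0 hx; rewrite mul0r mulr1 => /hker ha.
by rewrite hx ha mul0r.
Qed.

Lemma vleF_div : divisibility vleF.
Proof.
split.
- move=> x; have [a [b [hb ->]]] := has_rep x; apply: vleF_intro => //; exact: grefl.
- move=> x y z h1 h2.
  have [a [b [hb hx]]] := has_rep x; have [c [e [he hy]]] := has_rep y.
  have [g [k [hk hz]]] := has_rep z.
  have H1 := vleF_all h1 hb he hx hy; have H2 := vleF_all h2 he hk hy hz.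
  rewrite hx hz; apply: vleF_intro => //; apply: (gcanc he).
  apply: (gtrans (dvR (gmulr k H1) (x' := a * k * e) (y' := c * k * b) _ _)
    (dvR (gmulr b H2) (x' := c * k * b) (y' := g * b * e) _ _)); ring.
- move=> x y z h1 h2.
  have [a [b [hb hx]]] := has_rep x; have [c [e [he hy]]] := has_rep y.
  have [g [k [hk hz]]] := has_rep z.
  have H1 := vleF_all h1 hb he hx hy; have H2 := vleF_all h2 hb hk hx hz.
  rewrite hx hy hz fracB ?phinz //; apply: vleF_intro => //; first exact: gnzmul.
  have H3 := dvR (gmulr e H2) (x' := a * e * k) (y' := g * b * e) (ltac:(ring)) (ltac:(ring)).
  apply: (dvR (gsub (gmulr k H1) H3)); ring.
- move=> x y z h1.
  have [a [b [hb hx]]] := has_rep x; have [c [e [he hy]]] := has_rep y.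
  have [g [k [hk hz]]] := has_rep z.
  have H1 := vleF_all h1 hb he hx hy.
  rewrite hx hy hz !fracM ?phinz //; apply: vleF_intro; try exact: gnzmul.
  apply: (dvR (gmulr (g * k) H1)); ring.
- move=> h; have := vleF0 h; apply/eqP; exact: oner_neq0.
Qed.

Lemma vleF_tot : total_rel vleF.
Proof.
move=> x y; have [a [b [hb hx]]] := has_rep x; have [c [e [he hy]]] := has_rep y.
rewrite hx hy; case: (hS_tot (a * e) (c * b)) => h; [left|right]; exact: vleF_intro.
Qed.

Lemma vleF_can : cancellation vleF.
Proof.
move=> x y z hz0 h.
have [a [b [hb hx]]] := has_rep x; have [c [e [he hy]]] := has_rep y.
have [g [k [hk hz]]] := has_rep z.
have hg : ~ dv 0 g.
  move=> hg; apply: hz0; rewrite hz (_ : (0 : F) = phi 0 / phi 1); last by rewrite rmorph0 mul0r.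
  apply: vleF_intro n1 hk _; rewrite mul0r mulr1; exact: hg.
move: h; rewrite hx hy hz !fracM ?phinz // => h.
have H1 := vleF_all h (gnzmul hb hk) (gnzmul he hk) erefl erefl.
apply: vleF_intro => //; apply: (gcanc (gnzmul hg hk)).
apply: (dvR H1); ring.
Qed.


Definition vleF_td : tdiv F vleF := TDiv F vleF vleF_div vleF_tot vleF_can.
Local Notation leF := (leG F vleF vleF_td).
Local Notation vF := (vG F vleF vleF_td).

Lemma pF : (p%:R : F) = phi p%:R. Proof. by rewrite rmorph_nat. Qed.
Lemma h6F : ~ vleF p%:R 1.
Proof. by rewrite pF -(rmorph1 phi) vleF_phi; exact: h6'. Qed.
Lemma hp0F : ~ vleF 0 p%:R.
Proof. by rewrite pF -(rmorph0 phi) vleF_phi; exact: hp0'. Qed.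
Lemma pnzF : (p%:R : F) != 0. Proof. rewrite pF; apply: phinz; exact: hp0'. Qed.

Lemma vleF_nz0 z : z != 0 -> ~ vleF 0 z.
Proof. by move=> hz /vleF0 h; rewrite h eqxx in hz. Qed.

Lemma h7F y : vleF (p%:R * ((y ^+ p - y) ^+ 2 - 1)) (y ^+ p - y).
Proof.
have [a [b [hb hy]]] := has_rep y.
have hb' := phinz hb.
have ha : phi a = y * phi b by rewrite hy divfK.
have H := proj2 (vleF_phi _ _) (hS_7 a b).
have hz : (phi b ^+ p.+1) ^+ 2 != 0 by rewrite !expf_neq0.
apply: (vleF_can (vleF_nz0 hz)).
have E1 : phi (p%:R * ((a ^+ p * b - b ^+ p * a) ^+ 2 - (b ^+ p.+1) ^+ 2)) =
    p%:R * ((y ^+ p - y) ^+ 2 - 1) * (phi b ^+ p.+1) ^+ 2.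
  rewrite !(rmorphXn, rmorphM, rmorphB, rmorph_nat) ha exprMn !exprS.
  move: (y ^+ p) (phi b ^+ p) => Y B; ring.
have E2 : phi ((a ^+ p * b - b ^+ p * a) * b ^+ p.+1) = (y ^+ p - y) * (phi b ^+ p.+1) ^+ 2.
  rewrite !(rmorphXn, rmorphM, rmorphB, rmorph_nat) ha exprMn !exprS.
  move: (y ^+ p) (phi b ^+ p) => Y B; ring.
by rewrite -E1 -E2.
Qed.

Lemma char0F : [pchar F] =i pred0.
Proof.
move=> q; rewrite !inE; apply/negbTE/negP => /andP [hqq /eqP hq0].
have hu := hQ q.-1; rewrite prednK ?prime_gt0 // in hu.
apply: (unit_nI hu); apply/hker; by rewrite rmorph_nat.
Qed.

Lemma leF_nz x y : x != 0 -> y != 0 -> (leF (vF x) (vF y) <-> vleF x y).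
Proof. exact: leG_nz. Qed.
Lemma vF_eq x y : x != 0 -> y != 0 -> (vF x = vF y <-> vleF x y /\ vleF y x).
Proof. exact: vG_eq_nz. Qed.
Lemma vF0 : (0 : GV F vleF vleF_td) = vF 1. Proof. exact: vG0. Qed.

Lemma pvalF : p_valuation p leF vF.
Proof.
have o1 : (1 : F) != 0 := oner_neq0 F.
have d1p : vleF 1 p%:R by rewrite pF -(rmorph1 phi) vleF_phi; exact: d1p.
split.
- exact: char0F.
- exact: vG_valuation.
- rewrite vF0; split; first by apply/leF_nz => //; exact: pnzF.
  by move/(vF_eq pnzF o1) => [h _]; apply: h6F.
- move=> x hx [[l1 n1] [l2 n2]].
  rewrite vF0 in l1 n1.
  have h1x : vleF 1 x by apply/(leF_nz o1 hx).
  have hxp : vleF x p%:R by apply/(leF_nz hx pnzF).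
  have hpx : ~ vleF p%:R x by move=> h; apply: n2; apply/(vF_eq pnzF hx).
  have := gdisc vleF_div vleF_tot vleF_can hp hp0F h7F h1x hxp hpx.
  by move=> h; apply: n1; apply/(vF_eq hx o1).
- move=> x hx; rewrite vF0 => /(leF_nz o1 hx) h1x.
  have [n hn] := gres vleF_div vleF_tot h6F h7F pp h1x.
  exists n; case: (eqVneq (x - n%:R) 0) => e; [by left| right; split => //].
  have h1n : vleF 1 (x - n%:R).
    apply: (T1.gsub vleF_div) => //; exact: (T1.g1n vleF_div).
  change (gt_rel leF (vF (x - n%:R)) (vF 1)); split; first by apply/(leF_nz o1 e).
  by move/(vF_eq e o1) => [h _].
Qed.

Lemma corrF : corresponds dv phi leF vF.
Proof.
move=> a b; split.
- move=> h; case: (eqVneq (phi b) 0) => hb0; [by left|right].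
  have ha : phi a != 0.
    apply/eqP => /hker ha; move/eqP: hb0; apply; apply/hker; exact: gtrans ha h.
  by split => //; apply/(leF_nz ha hb0); apply/vleF_phi.
- move=> hv; case: (eqVneq (phi b) 0) => hb0.
    by move/hker: hb0 => hb; exact: gtrans (g0 a) hb.
  case: hv => [e|[ha h]]; first by rewrite e eqxx in hb0.
  by apply/vleF_phi; apply/(leF_nz ha hb0).
Qed.

End VF.

Lemma additive_int (G : zmodType) (g : int -> G) :
  (forall m n, g (m + n) = g m + g n) -> forall n, g n = g 1 *~ n.
Proof.
move=> gD.
have g0 : g 0 = 0 by apply: (@addrI _ (g 0)); rewrite -gD !addr0.
have gnat : forall k : nat, g k = g 1 *~ k.
  elim=> [|k IH]; first by rewrite g0 mulr0z.
  by rewrite -addn1 PoszD gD IH mulrzDr mulr1z.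
case=> k; first exact: gnat.
rewrite NegzE mulrNz -gnat.
have := gD (- (k.+1)%:Z) (k.+1)%:Z; rewrite addNr g0 => /eqP; rewrite eq_sym addr_eq0.
by move/eqP.
Qed.

Definition HI : idealH A (dv 0) :=
  IdealH A (dv 0) (grefl 0) (fun a b ha hb => gsub ha hb) (fun a b ha => g0mul b ha) g01
    (fun a b h => gprime h).
Definition FF := FQ A (dv 0) HI.
Definition phiFF : {rmorphism A -> FF} := phiF A (dv 0) HI.
Lemma hqFF : is_quot_field_of_quotient (div_support dv) phiFF.
Proof. split; [exact: phiF_ker | exact: phiF_frac]. Qed.

Lemma bwd_val :
  (forall (F : fieldType) (phi : {rmorphism A -> F})
          (G : zmodType) (le : G -> G -> Prop) (v : F -> G),
     is_quot_field_of_quotient (div_support dv) phi ->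
     ordered_abelian_group le ->
     p_valuation p le v ->
     corresponds dv phi le v ->
     value_group_is_Z le v) ->
  forall a, ~ dv 0 a -> exists n, dv (P n) a /\ dv a (P n).
Proof.
move=> hR a ha.
have hq := hqFF.
have hpv := pvalF hq.
have hog := leG_oag _ _ (vleF_td hq).
have := hR _ _ _ _ _ hq hog hpv (corrF hq).
move=> [f [fD fle fv fsurj]].
case: hog => lrefl lanti ltrans ltot ltransl.
case: hpv => _ hval hgt hmin _.
have f0 : f 0 = 0 by apply: (@addrI _ (f 0)); rewrite -fD !addr0.
have [j hj] := fv _ (pnzF hq).
have flt : forall m n, f m <> f n -> (m < n)%R \/ (n < m)%R.
  by move=> m n hmn; case: (ltrgtP m n) => [h|h|e]; [left|right|rewrite e in hmn].
have fneq : forall m n, m <> n -> f m <> f n.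
  move=> m n hmn e; apply: hmn; apply/eqP; rewrite eq_le; apply/andP; split.
  - by apply/fle; rewrite e; apply: lrefl.
  - by apply/fle; rewrite e; apply: lrefl.
have hj1 : j = 1.
  case: hgt; rewrite hj -f0 => /fle hj0 hjn0.
  have hjn : j != 0 by apply/eqP => e; apply: hjn0; rewrite e.
  case: (lerP j 1) => hj1; first by lia.
  exfalso; have [x [hx hvx]] := fsurj 1.
  apply: (hmin x hx); split.
  - rewrite hvx -f0; split; first by apply/fle.
    by apply: fneq.
  - rewrite hvx hj; split; first by apply/fle; lia.
    by apply: fneq; lia.
pose g n := vG _ _ (vleF_td hq) (phiFF (P n)).
have gD : forall m n, g (m + n) = g m + g n.
  move=> m n; rewrite /g PD rmorphM; case: hval => hm _; apply: hm; apply: (phinz hq); exact: Pnz.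
have g1 : g 1 = f 1 by rewrite /g P1 -hj1 -hj rmorph_nat.
have gf : forall n, g n = f n.
  by move=> n; rewrite (additive_int gD) (additive_int fD) g1.
have [k hk] := fv _ (phinz hq ha).
have := (proj1 (vF_eq hq (phinz hq ha) (phinz hq (@Pnz k)))).
rewrite hk -gf => /(_ erefl) [h1 h2].
by exists k; split; [apply/(@vleF_phi _ _ hq (P k) a) | apply/(@vleF_phi _ _ hq a (P k))].
Qed.

Lemma bwd_max : (forall a, ~ dv 0 a -> exists n, dv (P n) a /\ dv a (P n)) ->
  maximal_in_SpecDp p dv0 dv.
Proof.
move=> hval; split; first exact: hS.
move=> dv2 hS2 hsub a b h2.
case: hS2 => [[hd2 h62 _] _ hcan2 _].
have Pnz2 : forall n, ~ dv2 0 (P n).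
  move=> n h; apply: (T1.g01 hd2); rewrite -(PN n); exact: (T1.g0mul hd2).
case: (classic (dv 0 b)) => hb; first exact: gtrans (g0 a) hb.
have [n [hn1 hn2]] := hval b hb.
case: (classic (dv 0 a)) => ha.
- exfalso; apply: (Pnz2 n).
  apply: (T1.gtrans hd2 (hsub _ _ ha)); apply: (T1.gtrans hd2 h2); exact: hsub.
- have [m [hm1 hm2]] := hval a ha.
  have h3 : dv2 (P m) (P n).
    apply: (T1.gtrans hd2 (hsub _ _ hm1)); apply: (T1.gtrans hd2 h2); exact: hsub.
  case: (lerP m n) => hmn.
  + exact: gtrans hm2 (gtrans (dPle m n hmn) hn1).
  + exfalso.
    have h4 : dv2 (P (n + 1)) (P n).
      apply: (T1.gtrans hd2 _ h3); apply: hsub; apply: dPle; lia.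
    have h5 : dv2 (P n * p%:R) (P n * 1) by rewrite mulr1 -P1 -PD.
    apply: (h62 1 (T1.g01 hd2)); rewrite mulr1.
    exact: (T1.gcancl hcan2 (Pnz2 n) h5).
Qed.

End ALevel.

End T2.
Import T2.

Unset Implicit Arguments. Set Strict Implicit.
Theorem theorem3p5 (p : nat) (A : comUnitRingType) (dv0 : A -> A -> Prop) :
  prime p ->
  (* Q is contained in A: every positive integer is invertible in A *)
  (forall n : nat, (n.+1)%:R \is a @GRing.unit A) ->
  p_divisibility p dv0 ->
  p_archimedean p dv0 ->
  forall dv : A -> A -> Prop,
    in_SpecDp p dv0 dv ->
    (maximal_in_SpecDp p dv0 dv <->
     (prime_ideal (div_support dv) /\
      forall (F : fieldType) (phi : {rmorphism A -> F})
             (G : zmodType) (le : G -> G -> Prop) (v : F -> G),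
        is_quot_field_of_quotient (div_support dv) phi ->
        ordered_abelian_group le ->
        p_valuation p le v ->
        corresponds dv phi le v ->
        value_group_is_Z le v)).
Proof.
move=> pp hQ hd0 harch dv hS; split.
- move=> hmax; split; first exact: (supp_prime _ _ _ _ hS).
  exact: (fwd_main _ _ _ _ pp hQ harch hS hmax).
- move=> [_ hR]; apply: (bwd_max pp hQ hS) => a ha.
  exact: (bwd_val pp hQ hS hR ha).
Qed.
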